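(* Let $\rho_n$ be the number of distinct Manacher arrays of strings of length $n$ (over arbitrary alphabets). Then $\rho_n=\Omega(3^n)$.
   Context: The Manacher array of a string $S$ of length $n$ is the array $\mathsf A[1..2n-1]$ where, for $i=2k-1$, $\mathsf A[i]$ is the largest $r\ge 0$ with $1\le k-r$, $k+r\le n$ and $S[k-r..k+r]$ a palindrome, and for $i=2k$, $\mathsf A[i]$ is the largest $r\ge0$ with $1\le k-r+1$, $k+r\le n$ and $S[k-r+1..k+r]$ a palindrome. *)

(* Defs.v *)
From mathcomp Require Import all_boot.
Set Implicit Arguments. Unset Strict Implicit. Unset Printing Implicit Defensive.

(* 1-based inclusive substring S[a..b] (empty when b < a). *)
Definition substr (T : Type) (s : seq T) (a b : nat) : seq T :=
  take (b.+1 - a) (drop a.-1 s).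

Definition is_pal (T : eqType) (w : seq T) : bool := w == rev w.

(* Entry A[i] (1-based i in 1..2n-1) of the Manacher array of s. *)
Definition manacher_entry (T : eqType) (s : seq T) (i : nat) : nat :=
  let n := size s in
  if odd i then
    (* i = 2k-1 *)
    let k := i.+1 %/ 2 in
    \max_(r < n.+1 | [&& 1 <= k - r, r < k, k + r <= n &
                        is_pal (substr s (k - r) (k + r))]) r
  else
    (* i = 2k ; condition 1 <= k - r + 1 (over integers) is r <= k *)
    let k := i %/ 2 in
    \max_(r < n.+1 | [&& r <= k, k + r <= n &
                        is_pal (substr s (k - r).+1 (k + r))]) r.

(* Manacher array A[1..2n-1], stored as a list whose j-th element (0-based)
   is A[j+1]. *)
Definition manacher (T : eqType) (s : seq T) : seq nat :=
  [seq manacher_entry s i | i <- iota 1 (2 * size s - 1)].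

Definition is_manacher_array (n : nat) (A : seq nat) : Prop :=
  exists (T : eqType) (s : seq T), size s = n /\ manacher s = A.

(* Main.v *)
Require Import Defs.
From mathcomp Require Import all_boot.
From mathcomp Require Import zify.
Set Implicit Arguments. Unset Strict Implicit. Unset Printing Implicit Defensive.

Lemma pal_win (s : seq nat) a m : a + m <= size s ->
  is_pal (substr s a.+1 (a + m)) <->
  (forall t, t < m -> nth 0 s (a + t) = nth 0 s (a + m - 1 - t)).
Proof.
move=> Hs.
have -> : substr s a.+1 (a + m) = take m (drop a s).
  by rewrite /substr; congr (take _ _); lia.
set w := take m (drop a s).
have Sw : size w = m by rewrite size_take size_drop; case: ltnP; lia.
have Nw : forall t, t < m -> nth 0 w t = nth 0 s (a + t).
  by move=> t Ht; rewrite nth_take // nth_drop.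
rewrite /is_pal; split.
- move/eqP=> E t Ht.
  rewrite -Nw // E nth_rev ?Sw // Nw; last by lia.
  congr nth; lia.
- move=> H; apply/eqP/(eq_from_nth (x0:=0)); first by rewrite size_rev.
  move=> t; rewrite Sw => Ht.
  rewrite nth_rev ?Sw // Nw // Nw; last by lia.
  rewrite H //; congr nth; lia.
Qed.

Lemma G1 (s : seq nat) a m : a + m <= size s -> 0 < m ->
  (forall t, t < m -> nth 0 s (a + t) = nth 0 s (a + m - 1 - t)) ->
  m %/ 2 <= manacher_entry s (2 * a + m).
Proof.
move=> Hs Hm0 Hp; have Hpal := proj2 (pal_win Hs) Hp.
have Hr : m %/ 2 < (size s).+1 by lia.
rewrite /manacher_entry; have -> : odd (2 * a + m) = odd m by rewrite oddD oddM.
case/boolP: (odd m) => Hm; [have Hm2 : m %% 2 = 1 by rewrite modn2 Hm | have Hm2 : m %% 2 = 0 by rewrite modn2 (negbTE Hm)]; rewrite ?Hm ?(negbTE Hm).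
- apply: (@leq_bigmax_cond _ _ _ (Ordinal Hr)) => /=.
  have -> : (2 * a + m).+1 %/ 2 - m %/ 2 = a.+1 by lia.
  have -> : (2 * a + m).+1 %/ 2 + m %/ 2 = a + m by lia.
  rewrite Hpal !andbT; apply/andP; split; first by [].
  apply/andP; split; lia.
- apply: (@leq_bigmax_cond _ _ _ (Ordinal Hr)) => /=.
  have -> : ((2 * a + m) %/ 2 - m %/ 2).+1 = a.+1 by lia.
  have -> : (2 * a + m) %/ 2 + m %/ 2 = a + m by lia.
  rewrite Hpal !andbT; apply/andP; split; lia.
Qed.

Lemma G2 (s : seq nat) a m : a + m <= size s -> 1 < m ->
  nth 0 s a != nth 0 s (a + m - 1) ->
  manacher_entry s (2 * a + m) < m %/ 2.
Proof.
move=> Hs Hm0 Hne.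
have key : forall a' m', a' + m' <= size s -> 2 * a' + m' = 2 * a + m -> m <= m' ->
    ~~ is_pal (substr s a'.+1 (a' + m')).
  move=> a' m' H1 H2 H3; apply/negP=> /(pal_win H1) P.
  have := P (a - a'); have -> : a' + (a - a') = a by lia.
  have -> : a' + m' - 1 - (a - a') = a + m - 1 by lia.
  move=> E; move/eqP: Hne; apply; apply: E; lia.
have H0 : 0 < m %/ 2 by lia.
rewrite /manacher_entry; have -> : odd (2 * a + m) = odd m by rewrite oddD oddM.
case/boolP: (odd m) => Hm; [have Hm2 : m %% 2 = 1 by rewrite modn2 Hm | have Hm2 : m %% 2 = 0 by rewrite modn2 (negbTE Hm)]; rewrite ?Hm ?(negbTE Hm).
- rewrite /=.
  rewrite -(prednK H0) ltnS; apply/bigmax_leqP => /= r /and4P [h1 h2 h3 h4].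
  rewrite leqNgt; apply/negP => hr.
  move: h4; apply/negP.
  have := key ((2 * a + m).+1 %/ 2 - r).-1 (2 * r + 1).
  have -> : ((2 * a + m).+1 %/ 2 - r).-1.+1 = (2 * a + m).+1 %/ 2 - r by lia.
  have -> : ((2 * a + m).+1 %/ 2 - r).-1 + (2 * r + 1) = (2 * a + m).+1 %/ 2 + r by lia.
  apply; lia.
- rewrite /=.
  rewrite -(prednK H0) ltnS; apply/bigmax_leqP => /= r /and3P [h1 h2 h4].
  rewrite leqNgt; apply/negP => hr.
  move: h4; apply/negP.
  have := key ((2 * a + m) %/ 2 - r) (2 * r).
  have -> : (2 * a + m) %/ 2 - r + 2 * r = (2 * a + m) %/ 2 + r by lia.
  apply; lia.
Qed.

Definition newl (st : seq nat * nat * nat) (c : nat) : nat :=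
  let: (s, cur, prv) := st in
  if c == 0 then cur else if c == 1 then size s + 2 else prv.

Definition step (st : seq nat * nat * nat) (c : nat) : seq nat * nat * nat :=
  let: (s, cur, prv) := st in
  (rcons s (newl st c), (if c == 0 then cur else newl st c),
   (if c == 0 then prv else cur)).

Definition Inv (st : seq nat * nat * nat) : Prop :=
  let: (s, cur, prv) := st in
  [/\ cur != prv, (forall t, t < size s -> nth 0 s t < size s + 2) &
   exists b, [/\ 0 < b, b < size s, nth 0 s b.-1 = prv &
     forall t, b <= t < size s -> nth 0 s t = cur]].

Lemma step_inv st c : Inv st -> Inv (step st c).
Proof.
case: st => [[s cur] prv] [Hcp Hb [b [b0 bs Hprv Hrun]]].
have Hcs : cur = nth 0 s b by rewrite Hrun //; lia.
have Hfc : size s + 2 != cur by rewrite Hcs; have := Hb b bs; lia.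
have Hfp : size s + 2 != prv by rewrite -Hprv; have := Hb b.-1; lia.
rewrite /step /newl /=.
have Hsz : forall x, (forall t, t < size s -> nth 0 s t < size s + 2) -> x < size s + 3 ->
   forall t, t < size (rcons s x) -> nth 0 (rcons s x) t < size (rcons s x) + 2.
  move=> x H hx t; rewrite size_rcons nth_rcons => Ht0; case: (ltnP t (size s)) => Ht.
    by have := H t Ht; lia.
  by case: eqP => _; lia.
have Hcs3 : cur < size s + 3 by rewrite Hcs; have := Hb b bs; lia.
have Hps3 : prv < size s + 3 by rewrite -Hprv; have := Hb b.-1; lia.
have Hnew : forall x, exists b0, [/\ 0 < b0, b0 < size (rcons s x), nth 0 (rcons s x) b0.-1 = cur &
     forall t, b0 <= t < size (rcons s x) -> nth 0 (rcons s x) t = x].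
  move=> x; exists (size s); split; first by lia.
  * by rewrite size_rcons.
  * rewrite nth_rcons; case: ltnP => h; last by lia.
    by apply: Hrun; lia.
  * move=> t; rewrite size_rcons nth_rcons => /andP [h1 h2].
    have -> : t = size s by lia.
    by rewrite ltnn eqxx.
case: c => [|[|c]] /=.
- split => //; first by apply: Hsz.
  exists b; split => //; first by rewrite size_rcons; lia.
    by rewrite nth_rcons; case: ltnP => //; lia.
  move=> t; rewrite size_rcons nth_rcons ltnS => /andP [h1 h2].
  case: ltnP => h3; first by apply: Hrun; lia.
  have -> : t = size s by lia.
  by rewrite eqxx.
- split; [done | by apply: Hsz => //; lia | exact: Hnew].
- split; [by rewrite eq_sym | by apply: Hsz | exact: Hnew].
Qed.

Lemma fold_prefix q st : exists u, (foldl step st q).1.1 = st.1.1 ++ u /\ size u = size q.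
Proof.
elim: q st => [|c q IH] st /=; first by exists [::]; rewrite cats0.
have [u [E1 E2]] := IH (step st c).
exists (newl st c :: u); rewrite E1 /= E2; split => //.
by clear E1; case: st => [[s cur] prv] /=; rewrite cat_rcons.
Qed.

Lemma nth_manacher (s : seq nat) i : 0 < i -> i <= 2 * size s - 1 ->
  nth 0 (manacher s) i.-1 = manacher_entry s i.
Proof.
case: i => // i _ h2 /=; rewrite /manacher (nth_map 0); last by rewrite size_iota.
by rewrite nth_iota // add1n.
Qed.

Lemma coreA (S S' : seq nat) a : a.+1 < size S -> a.+1 < size S' ->
  nth 0 S a = nth 0 S a.+1 -> nth 0 S' a != nth 0 S' a.+1 ->
  manacher_entry S (2 * a + 2) != manacher_entry S' (2 * a + 2).
Proof.
move=> h1 h2 e ne.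
have g1 := @G1 S a 2; have g2 := @G2 S' a 2.
have : 2 %/ 2 <= manacher_entry S (2 * a + 2).
  apply: g1 => //; first by lia.
  case=> [|[|t]] // _.
    have -> : a + 2 - 1 - 0 = a.+1 by lia.
    by rewrite addn0.
  have -> : a + 2 - 1 - 1 = a by lia.
  by rewrite addn1.
have : manacher_entry S' (2 * a + 2) < 2 %/ 2.
  apply: g2 => //; first by lia.
  by have -> : a + 2 - 1 = a.+1 by lia.
move=> u v; apply/eqP => E; move: u v; rewrite E; lia.
Qed.

Lemma coreB (S S' : seq nat) a j : a.+1 < j -> j < size S -> j < size S' ->
  (forall t, a < t < j -> nth 0 S t = nth 0 S a.+1) ->
  nth 0 S a = nth 0 S j -> nth 0 S' a != nth 0 S' j ->
  manacher_entry S (2 * a + (j - a + 1)) != manacher_entry S' (2 * a + (j - a + 1)).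
Proof.
move=> h0 h1 h2 run e ne.
have : (j - a + 1) %/ 2 <= manacher_entry S (2 * a + (j - a + 1)).
  apply: G1; [lia | lia |] => t ht.
  have -> : a + (j - a + 1) - 1 - t = j - t by lia.
  case: (ltnP 0 t) => t0; last first.
    have -> : t = 0 by lia.
    by rewrite addn0 subn0.
  case: (ltnP t (j - a)) => t1; last first.
    have -> : t = j - a by lia.
    have -> : a + (j - a) = j by lia.
    by have -> : j - (j - a) = a by lia.
  rewrite run; last by lia.
  by rewrite run; lia.
have : manacher_entry S' (2 * a + (j - a + 1)) < (j - a + 1) %/ 2.
  apply: G2; [lia | lia |].
  by have -> : a + (j - a + 1) - 1 = j by lia.
move=> u v; apply/eqP => E; move: u v; rewrite E; lia.
Qed.

Lemma fold_facts s cur prv c q :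
  let S := (foldl step (step (s, cur, prv) c) q).1.1 in
  [/\ size S = size s + 1 + size q,
      (forall t, t < size s -> nth 0 S t = nth 0 s t) &
      nth 0 S (size s) = newl (s, cur, prv) c].
Proof.
have [u [E1 E2]] := fold_prefix q (step (s, cur, prv) c).
rewrite /= E1 /=; split.
- by rewrite size_cat size_rcons E2; lia.
- by move=> t ht; rewrite nth_cat size_rcons ltnS ltnW // nth_rcons ht.
- by rewrite nth_cat size_rcons ltnS leqnn nth_rcons ltnn eqxx.
Qed.

Lemma dist_core s cur prv x y q q' : Inv (s, cur, prv) ->
  (x == 0) && (y != 0) && (y <= 2) || (x == 2) && (y == 1) -> size q = size q' ->
  manacher (foldl step (step (s, cur, prv) x) q).1.1 !=
  manacher (foldl step (step (s, cur, prv) y) q').1.1.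
Proof.
case=> Hcp Hb [b [b0 bs Hprv Hrun]] Hxy Hq.
have [SS SP SJ] := fold_facts s cur prv x q.
have [SS' SP' SJ'] := fold_facts s cur prv y q'.
set S := (foldl _ _ q).1.1 in SS SP SJ *.
set S' := (foldl _ _ q').1.1 in SS' SP' SJ' *.
apply/negP => /eqP E.
have Eq : forall i, 0 < i -> i <= 2 * size S - 1 -> manacher_entry S i = manacher_entry S' i.
  move=> i h1 h2; rewrite -!nth_manacher // ?E //.
  by rewrite SS' -Hq -SS.
have Hcs : cur = nth 0 s b by rewrite Hrun //; lia.
have Hfc : size s + 2 != cur by rewrite Hcs; have := Hb b bs; lia.
have Hfp : size s + 2 != prv by rewrite -Hprv; have := Hb b.-1; lia.
have Hlast : nth 0 s (size s).-1 = cur by apply: Hrun; lia.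
case/orP: Hxy => [/andP [/andP [/eqP x0 y0] y2] | /andP [/eqP x2 /eqP y1]].
- have := @coreA S S' (size s).-1.
  have -> : (size s).-1.+1 = size s by lia.
  move=> H; move: (H ltac:(lia) ltac:(lia)) => {}H.
  have : manacher_entry S (2 * (size s).-1 + 2) != manacher_entry S' (2 * (size s).-1 + 2).
    apply: H.
    + by rewrite SJ x0 /= SP ?Hlast //; lia.
    + rewrite SJ' SP' ?Hlast; last by lia.
      have Hny : forall z, z != 0 -> z <= 2 -> newl (s, cur, prv) z != cur.
        by case=> [|[|[|z]]] //= _ _; rewrite eq_sym.
      by rewrite eq_sym; exact: Hny.
  by rewrite Eq ?eqxx //; lia.
- have := @coreB S S' b.-1 (size s).
  have -> : b.-1.+1 = b by lia.
  move=> H.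
  have : manacher_entry S (2 * b.-1 + (size s - b.-1 + 1)) !=
         manacher_entry S' (2 * b.-1 + (size s - b.-1 + 1)).
    apply: H; try lia.
    + by move=> t ht; rewrite !SP; try lia; rewrite !Hrun //; lia.
    + by rewrite SJ x2 /= SP ?Hprv //; lia.
    + by rewrite SJ' y1 /= SP' ?Hprv //; [rewrite eq_sym | lia].
  by rewrite Eq ?eqxx //; lia.
Qed.

Lemma dist_all c c' st : Inv st -> all (fun x => x <= 2) c -> all (fun x => x <= 2) c' ->
  size c = size c' -> c != c' ->
  manacher (foldl step st c).1.1 != manacher (foldl step st c').1.1.
Proof.
elim: c c' st => [|x c IH] [|y c'] st //= Hi /andP [hx hc] /andP [hy hc'] [Hs] Hne.
case: (eqVneq x y) => [exy | nxy].
  subst y; apply: IH => //; first exact: step_inv.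
  by apply: contraNneq Hne => ->.
case: st Hi => [[s cur] prv] Hi.
case: (eqVneq x 0) => [x0|x0].
  subst x; apply: dist_core => //.
  by rewrite eqxx /= hy andbT eq_sym nxy.
case: (eqVneq y 0) => [y0|y0].
  subst y; rewrite eq_sym; apply: dist_core => //; first by rewrite eqxx /= hx andbT nxy.
case: (eqVneq x 2) => [x2|x2].
  subst x; apply: dist_core => //.
  by clear Hne; move: hy y0 nxy; case: y => [|[|[|y]]].
rewrite eq_sym; apply: dist_core => //.
have y2 : y == 2 by clear Hne; move: hx x0 x2 nxy hy y0; case: x => [|[|[|x]]] //; case: y => [|[|[|y]]].
have x1 : x == 1 by clear Hne; move: hx x0 x2 nxy; case: x => [|[|[|x]]].
by rewrite y2 x1 orbT.
Qed.

Fixpoint allc m : seq (seq nat) :=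
  if m is m'.+1 then [seq x :: c | x <- [:: 0; 1; 2], c <- allc m'] else [:: [::]].

Lemma allcS m : allc m.+1 = [seq x :: c | x <- [:: 0; 1; 2], c <- allc m].
Proof. by []. Qed.

Lemma allc_size m : size (allc m) = 3 ^ m.
Proof. by elim: m => // m IH; rewrite allcS size_allpairs IH expnS. Qed.

Lemma allc_uniq m : uniq (allc m).
Proof.
elim: m => // m IH; rewrite allcS; apply: allpairs_uniq => //.
by move=> [a1 b1] [a2 b2] _ _ /= [-> ->].
Qed.

Lemma allc_mem m c : c \in allc m -> size c = m /\ all (fun x => x <= 2) c.
Proof.
elim: m c => [|m IH] c; first by rewrite inE => /eqP ->.
rewrite allcS.
case/allpairsP => [[x c0] [/= hx hc ->]].
have [h1 h2] := IH _ hc; split; first by rewrite /= h1.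
by rewrite /= h2 andbT; move: hx; rewrite !inE => /or3P [] /eqP ->.
Qed.

Definition st0 : seq nat * nat * nat := ([:: 0; 1], 1, 0).

Lemma st0_inv : Inv st0.
Proof.
split => //; first by case=> [|[|t]].
exists 1; split => // t /andP [h1 h2].
have -> : t = 1 by move: h1 h2; rewrite /=; lia.
by [].
Qed.

Lemma str_size c : size (foldl step st0 c).1.1 = size c + 2.
Proof. have [u [E1 E2]] := fold_prefix c st0; rewrite E1 size_cat E2 /=; lia. Qed.

Theorem mainTheorem2 :
  exists (C N : nat), 0 < C /\
    forall n, N <= n ->
      exists L : seq (seq nat),
        uniq L /\ (forall A, A \in L -> is_manacher_array n A) /\
        3 ^ n <= C * size L.
Proof.
exists 9, 2; split => // n hn.
exists [seq manacher (foldl step st0 c).1.1 | c <- allc (n - 2)]; split; [|split].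
- rewrite map_inj_in_uniq ?allc_uniq // => c c' hc hc' E.
  apply/eqP; apply: contraTT (eqxx (manacher (foldl step st0 c).1.1)) => ne.
  have [s1 a1] := allc_mem hc; have [s2 a2] := allc_mem hc'.
  by rewrite [X in _ == X]E; apply: dist_all => //; [exact: st0_inv | rewrite s1 s2].
- move=> A /mapP [c hc ->]; exists nat, (foldl step st0 c).1.1; split => //.
  have [s1 _] := allc_mem hc; rewrite str_size s1; lia.
- rewrite size_map allc_size.
  have -> : n = (n - 2) + 2 by lia.
  by rewrite expnD mulnC; have -> : n - 2 + 2 - 2 = n - 2 by lia.
Qed.
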